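(* Let $p\in[0,1]^N$ and let $\mathcal L:=\{i\in\{\tilde k+1,\dots,N\}:B^{\mathcal N}_{1:i}=i-1\}$. Then $$\mathcal L=\{\tilde k(p'):\ p'\in[0,1]^N,\ \|p-p'\|_0\le1,\ \tilde k(p')>\tilde k\}.$$
   Context: $q\in(0,1)$, $N\ge1$. For $x\in[0,1]^N$, $B^{\mathcal N}_{1:i}(x)=|\{j\in\{1,\dots,N\}:0\le x_j<iq/N\}|$ ($B^{\mathcal N}_{1:0}=0$) and $\tilde k(x)=\max\{i\in\{0,\dots,N\}:B^{\mathcal N}_{1:i}(x)=i\}$ is the Benjamini–Hochberg rejection count. Write $B^{\mathcal N}_{1:i}=B^{\mathcal N}_{1:i}(p)$ and $\tilde k=\tilde k(p)$. $\|p-p'\|_0$ is the number of indices at which $p$ and $p'$ differ. *)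

(* Defs.v *)
From mathcomp Require Import all_boot all_order all_algebra.
Set Implicit Arguments. Unset Strict Implicit. Unset Printing Implicit Defensive.
Import Order.TTheory GRing.Theory Num.Theory.
Local Open Scope ring_scope.

Definition BN {R : realFieldType} (q : R) (N : nat) (x : 'I_N -> R) (i : nat) : nat :=
  #|[set j : 'I_N | (0 <= x j) && (x j < i%:R * q / N%:R)]|.

(* Benjamini-Hochberg rejection count: max { i in {0..N} : B_{1:i}(x) = i } *)
Definition ktilde {R : realFieldType} (q : R) (N : nat) (x : 'I_N -> R) : nat :=
  \max_(i < N.+1 | BN q x i == i) (i : nat).

Definition l0dist {R : realFieldType} (N : nat) (x y : 'I_N -> R) : nat :=
  #|[set j : 'I_N | x j != y j]|.

Definition unit_cube {R : realFieldType} (N : nat) (x : 'I_N -> R) : Prop :=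
  forall j, 0 <= x j <= 1.

(* Main.v *)
Require Import Defs.
From mathcomp Require Import all_boot all_order all_algebra.
From mathcomp Require Import zify lra.
Import Order.TTheory GRing.Theory Num.Theory.
Local Open Scope ring_scope.

Section Aux.
Variable (R : realFieldType) (q : R) (N : nat).
Hypothesis hq0 : 0 < q.
Hypothesis hN : (1 <= N)%N.

Lemma thr_mono (l m : nat) : (l <= m)%N -> l%:R * q / N%:R <= m%:R * q / N%:R.
Proof.
move=> lm; rewrite ler_pM2r ?invr_gt0 ?ltr0n //.
by rewrite ler_pM2r // ler_nat.
Qed.

Lemma thr_pos (l : nat) : (1 <= l)%N -> 0 < l%:R * q / N%:R.
Proof. by move=> hl; rewrite divr_gt0 ?mulr_gt0 ?ltr0n. Qed.

Lemma BN_mono (x : 'I_N -> R) l m : (l <= m)%N -> (BN q x l <= BN q x m)%N.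
Proof.
move=> lm; apply: subset_leq_card; apply/subsetP => j.
rewrite !inE => /andP[-> h] /=; apply: lt_le_trans h _; exact: thr_mono.
Qed.

Lemma BN_leN (x : 'I_N -> R) l : (BN q x l <= N)%N.
Proof. by rewrite /BN; apply: leq_trans (max_card _) _; rewrite card_ord. Qed.

Lemma BN_ivt (x : 'I_N -> R) d : forall l, (N - l)%N = d -> (l <= N)%N ->
  (l <= BN q x l)%N -> exists l', [/\ (l <= l')%N, (l' <= N)%N & BN q x l' = l'].
Proof.
elim: d => [|d IH] l hd hlN hl.
  have : BN q x l = l by have := BN_leN x l; lia.
  by exists l; split.
case: (eqVneq (BN q x l) l) => e; first by exists l; split.
have h1 : (l < BN q x l)%N by rewrite ltn_neqAle eq_sym e.
have hlt : (l < N)%N by have := BN_leN x l; lia.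
have := BN_mono x _ _ (leqnSn l) => h2.
have [l' [h3 h4 h5]] := IH l.+1 ltac:(lia) hlt ltac:(lia).
by exists l'; split => //; lia.
Qed.

Lemma kt_le (x : 'I_N -> R) : (ktilde q x <= N)%N.
Proof. by apply/bigmax_leqP => i _; rewrite -ltnS. Qed.

Lemma kt_max (x : 'I_N -> R) l : (l <= N)%N -> BN q x l = l -> (l <= ktilde q x)%N.
Proof.
move=> hl e; have := @leq_bigmax_cond _ (fun i : 'I_N.+1 => BN q x i == i)
  (fun i : 'I_N.+1 => (i : nat)) (Ordinal (hl : (l < N.+1)%N)).
by apply; rewrite /= e.
Qed.

Lemma kt_spec (x : 'I_N -> R) : BN q x (ktilde q x) = ktilde q x.
Proof.
rewrite /ktilde; apply/eqP.
apply: (big_ind (fun m => BN q x m == m)).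
- apply/eqP; rewrite /BN; apply/eqP; rewrite cards_eq0; apply/eqP/setP => j.
  by rewrite !inE mul0r mul0r; case: leP => //= h; rewrite ltNge h.
- by move=> a b ha hb; rewrite /maxn; case: ifP.
- by move=> i.
Qed.

Lemma BN_above (x : 'I_N -> R) l : (ktilde q x < l)%N -> (l <= N)%N -> (BN q x l < l)%N.
Proof.
move=> hk hl; rewrite ltnNge; apply/negP => h.
have [l' [h1 h2 h3]] := BN_ivt x _ _ erefl hl h.
have := kt_max _ _ h2 h3; lia.
Qed.

Lemma kt_char (x : 'I_N -> R) i : (i <= N)%N -> BN q x i = i ->
  (forall l, (i < l)%N -> (l <= N)%N -> BN q x l != l) -> ktilde q x = i.
Proof.
move=> hi e hl; apply/eqP; rewrite eqn_leq kt_max // andbT.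
apply/bigmax_leqP => l /eqP el; rewrite leqNgt; apply/negP => hil.
by have := hl l hil (ltn_ord l); rewrite el eqxx.
Qed.

Lemma BN_l0 (x y : 'I_N -> R) l : (l0dist x y <= 1)%N -> (BN q x l <= BN q y l + 1)%N.
Proof.
move=> hd; rewrite /BN.
set A := [set j | _]; set B := [set j | _].
apply: (@leq_trans #|B :|: [set j | x j != y j]|).
  apply: subset_leq_card; apply/subsetP => j; rewrite !inE.
  by case: eqVneq => [->|_] h; rewrite ?orbF ?orbT.
by apply: leq_trans (leq_card_setU _ _) _; rewrite leq_add2l.
Qed.

Lemma l0dist_sym (x y : 'I_N -> R) : l0dist x y = l0dist y x.
Proof. by rewrite /l0dist; apply: eq_card => j; rewrite !inE eq_sym. Qed.

End Aux.

Theorem proposition1 (R : realFieldType) (q : R) (N : nat)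
    (hq0 : 0 < q) (hq1 : q < 1) (hN : (1 <= N)%N)
    (p : 'I_N -> R) (hp : unit_cube p) (i : nat) :
  [/\ (ktilde q p < i)%N, (i <= N)%N & BN q p i = i.-1]
  <->
  (exists p' : 'I_N -> R,
      [/\ unit_cube p', (l0dist p p' <= 1)%N,
          (ktilde q p < ktilde q p')%N & ktilde q p' = i]).
Proof.
split.
- case=> hk hi hB.
  set t := fun l : nat => l%:R * q / N%:R.
  have hi1 : (1 <= i)%N by lia.
  have ht : forall l, (1 <= l)%N -> 0 < t l by move=> l hl; exact: thr_pos.
  have [j0 hj0 | none] := pickP (fun j => t i <= p j); last first.
    have : [set j : 'I_N | (0 <= p j) && (p j < t i)] = setT.
      apply/setP => j; rewrite !inE; have := none j => /= /negbT.
      by rewrite -ltNge => ->; rewrite andbT; case/andP: (hp j).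
    move=> e; have := congr1 (fun A : {set 'I_N} => #|A|) e; rewrite /= cardsT card_ord.
    by move: hB; rewrite /BN => ->; lia.
  case: (@arg_minP _ R _ j0 (fun j => t i <= p j) p hj0) => j /= hj hmin.
  set p' := fun k : 'I_N => if k == j then 0 else p k.
  have hp' : unit_cube p'.
    by move=> k; rewrite /p'; case: eqP => _; [rewrite lexx ler01 | exact: hp].
  have hd : (l0dist p p' <= 1)%N.
    rewrite /l0dist -(cards1 j); apply: subset_leq_card; apply/subsetP => k.
    rewrite !inE /p'; case: (eqVneq k j) => [->|_]; rewrite ?eqxx //.
  have hBi : BN q p' i = i.
    rewrite /BN -/(t i).
    have -> : [set k : 'I_N | (0 <= p' k) && (p' k < t i)] =
              j |: [set k : 'I_N | (0 <= p k) && (p k < t i)].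
      apply/setP => k; rewrite !inE /p'; case: eqP => [->|] //=.
      by rewrite lexx ht.
    rewrite cardsU1 inE.
    have -> : (0 <= p j) && (p j < t i) = false by rewrite ltNge hj andbF.
    by move: hB; rewrite /BN => ->; lia.
  have hBl : forall l, (i < l)%N -> (l <= N)%N -> BN q p' l != l.
    move=> l hil hlN; rewrite neq_ltn; apply/orP; left.
    have hsub : [set k : 'I_N | (0 <= p' k) && (p' k < l%:R * q / N%:R)] \subset
                j |: [set k : 'I_N | (0 <= p k) && (p k < t l)].
      apply/subsetP => k; rewrite !inE /p'; case: eqP => [->|] //=.
    have hc := subset_leq_card hsub; rewrite cardsU1 inE in hc.
    have hBl : (BN q p l < l)%N := @BN_above R q N hq0 hN p l (ltn_trans hk hil) hlN.
    case: (ltrP (p j) (t l)) => hpj.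
      move: hc; rewrite hpj andbT.
      have -> : (0 <= p j) = true by case/andP: (hp j).
      rewrite /BN /=; move=> hc; apply: leq_ltn_trans hc _; exact: hBl.
    have hsub2 : [set k : 'I_N | (0 <= p k) && (p k < t l)] \subset
                 [set k : 'I_N | (0 <= p k) && (p k < t i)].
      apply/subsetP => k; rewrite !inE => /andP[-> hk2] /=.
      rewrite ltNge; apply/negP => hk3.
      have := hmin k hk3 => hle.
      have : p k < p k by apply: lt_le_trans hk2 (le_trans hpj hle).
      by rewrite ltxx.
    have hc2 := subset_leq_card hsub2.
    apply: leq_ltn_trans hc _.
    move: hc2; rewrite -/(BN q p l) -/(BN q p i) hB => hc2.
    have : (BN q p l <= i.-1)%N by [].
    case: (~~ _) => /=; lia.
  have hkt := @kt_char R q N p' i hi hBi hBl.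
  exists p'; split => //; first by rewrite hkt.
- case=> p' [hp' hd hk <-]; split => //; first exact: (@kt_le R q N p').
  have hd' : (l0dist p' p <= 1)%N by rewrite (@l0dist_sym R N p' p).
  have h1 := @BN_l0 R q N p' p (ktilde q p') hd'.
  rewrite kt_spec in h1.
  have h2 : (BN q p (ktilde q p') < ktilde q p')%N := @BN_above R q N hq0 hN p _ hk (@kt_le R q N p').
  lia.
Qed.
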